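(* For every time $t\in\{0,1,\dots,T-1\}$, every risk-aversion vector $\beta$, and every spot price $p\in\mathbb R$: (i) for every $r\in\mathcal R$, the map $x\mapsto xp+\tilde V_{t,T}(r+x,p\,|\,\beta)$ is convex on $\mathcal X(r)$; (ii) the map $r\mapsto \tilde V_{t,T}(r,p\,|\,\beta)$ is convex on $\mathcal R$; (iii) the map $r\mapsto V_{t,T}(r,p\,|\,\beta)$ is convex on $\mathcal R$. Moreover, $r\mapsto V_{T,T}(r,p\,|\,\beta)$ is convex on $\mathcal R$.
   Context: Model (dynamic EV charging). Fix a horizon $T\in\{1,2,\dots\}$, a battery capacity $R_{\max}>0$, a maximal charge per period $x_{\max}>0$, an initial charge $R_0\in[0,R_{\max}]$, an access fee $c_f\in\mathbb R$, a reference price $p_{\mathrm{ref}}>0$, a constant $\gamma_h\ge 0$, a deterministic seasonality function $g:\mathbb R\to\mathbb R$, and price parameters $\kappa_Y>0$, $\mu_Y\in\mathbb R$, $\sigma_Y>0$, $\lambda_J\in(0,1)$, $\mu_J\in\mathbb R$, $\sigma_J>0$. Spot prices are $P_t=g(t)+Y_t$ with $Y_{t+1}=Y_te^{-\kappa_Y}+\mu_Y(1-e^{-\kappa_Y})+\xi_{t+1}+X_{t+1}J_{t+1}$, where $(\xi_t)$ are i.i.d. $\mathcal N\big(0,\sigma_Y^2(1-e^{-2\kappa_Y})/(2\kappa_Y)\big)$, $(X_t)$ are i.i.d. Bernoulli$(\lambda_J)$, $(J_t)$ are i.i.d. $\mathcal N(\mu_J,\sigma_J^2)$, all mutually independent.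 Define $\psi_{t+1}=g(t+1)-g(t)e^{-\kappa_Y}+\mu_Y(1-e^{-\kappa_Y})+\xi_{t+1}+X_{t+1}J_{t+1}$ and $\psi_{t+1,Y}=\psi_{t+1}-g(t+1)$ (so given $P_t=p$, $P_{t+1}$ has the law of $pe^{-\kappa_Y}+\psi_{t+1}$ and $Y_{t+1}$ that of $pe^{-\kappa_Y}+\psi_{t+1,Y}$). Let $\mathcal R=[0,R_{\max}]$, $\mathcal X(r)=[0,\min\{R_{\max}-r,x_{\max}\}]$, and shortage $h(r)=\min\{R_0+Tx_{\max},R_{\max}\}-r$. Let $\gamma_Y:\mathbb R\to(0,\infty)$ be a compensation function. Risk measures. For $\alpha\in(0,1)$: $\mathrm{VaR}_\alpha(X)=\inf\{u:\mathbf P(X\le u)>\alpha\}$, $\mathrm{CVaR}_\alpha(X)=\inf_u\{u+(1-\alpha)^{-1}\mathbf E[(X-u)^+]\}$. For $\beta_t=(\lambda_t,\alpha_t)\in[0,1]\times(0,1)$, $\rho_{\beta_t}(X)=(1-\lambda_t)\mathbf E[X]+\lambda_t\mathrm{CVaR}_{\alpha_t}(X)$. A risk-aversion vector is $\beta=(\lambda_0,\alpha_0,\dots,\lambda_T,\alpha_T)$. Value functions. For $r\in\mathcal R$, $p\in\mathbb R$: $V_{T,T}(r,p\,|\,\beta)=\rho_{\beta_T}\big[\big(1+\gamma_h h(r)+\gamma_Y(pe^{-\kappa_Y}+\psi_{T+1,Y})\big)h(r)p_{\mathrm{ref}}\big]$, and for $t=T-1,\dots,0$: $\tilde V_{t,T}(r,p\,|\,\beta)=\rho_{\beta_t}\big[V_{t+1,T}(r,pe^{-\kappa_Y}+\psi_{t+1}\,|\,\beta)\big]$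 (post-decision value function) and $V_{t,T}(r,p\,|\,\beta)=\min_{x\in\mathcal X(r)}\{xp-c_f+\tilde V_{t,T}(r+x,p\,|\,\beta)\}$. *)

(* Defs.v *)
From HB Require Import structures.
From mathcomp Require Import all_boot all_order all_algebra.
From mathcomp Require Import all_classical all_reals all_analysis.
Set Implicit Arguments. Unset Strict Implicit. Unset Printing Implicit Defensive.
Import Order.TTheory GRing.Theory Num.Theory.
Import numFieldNormedType.Exports.
Local Open Scope classical_set_scope.
Local Open Scope ring_scope.

Record ev_model (R : realType) := EVModel {
  ev_T : nat;
  ev_Rmax : R;         (* battery capacity *)
  ev_xmax : R;         (* maximal charge per period *)
  ev_R0 : R;           (* initial charge *)
  ev_cf : R;           (* access fee *)
  ev_pref : R;         (* reference price *)
  ev_gh : R;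
  ev_g : R -> R;       (* seasonality *)
  ev_kY : R; ev_muY : R; ev_sY : R;
  ev_lJ : R; ev_muJ : R; ev_sJ : R;
  ev_gY : R -> R       (* compensation function gamma_Y *)
}.

Section EV.
Context {R : realType} (M : ev_model R).
Local Notation T := (ev_T M).
Local Notation Rmax := (ev_Rmax M).
Local Notation xmax := (ev_xmax M).
Local Notation kY := (ev_kY M).

(** One-step noise space: (xi, (X, J)) with xi, X, J independent, i.e. the
    joint law is the product of the three marginal laws. *)
Definition noise_space := (R * (bool * R))%type.

Definition sd_xi : R :=
  Num.sqrt (ev_sY M ^+ 2 * (1 - expR (- (2 * kY))) / (2 * kY)).

Definition noise_prob :=
  (normal_prob 0 sd_xi \x (bernoulli_prob (ev_lJ M) \x normal_prob (ev_muJ M) (ev_sJ M)))%E.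

Definition noise (w : noise_space) : R :=
  w.1 + (if w.2.1 then w.2.2 else 0).

(** psi_{t+1} as a function of the noise, for t+1 = s *)
Definition psi (s : nat) (w : noise_space) : R :=
  ev_g M s%:R - ev_g M (s.-1)%:R * expR (- kY) + ev_muY M * (1 - expR (- kY)) + noise w.

Definition psiY (s : nat) (w : noise_space) : R := psi s w - ev_g M s%:R.

Definition Ex (Z : noise_space -> \bar R) : \bar R :=
  (\int[noise_prob]_w Z w)%E.

Definition CVaR (a : R) (Z : noise_space -> \bar R) : \bar R :=
  ereal_inf [set (u%:E + ((1 - a)^-1)%:E * Ex (fun w => maxe (Z w - u%:E) 0%E))%E
            | u in [set: R]].

Definition rho (l a : R) (Z : noise_space -> \bar R) : \bar R :=
  ((1 - l)%:E * Ex Z + l%:E * CVaR a Z)%E.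

Definition statesR : set R := `[0, Rmax].
Definition actions (r : R) : set R := `[0, Num.min (Rmax - r) xmax].
Definition shortage (r : R) : R := Num.min (ev_R0 M + T%:R * xmax) Rmax - r.

Section values.
Variables (lam alpha : nat -> R).  (* risk-aversion vector beta *)

Definition VT (r p : R) : \bar R :=
  rho (lam T) (alpha T) (fun w =>
    ((1 + ev_gh M * shortage r + ev_gY M (p * expR (- kY) + psiY T.+1 w))
       * shortage r * ev_pref M)%:E).

(** Vrec n = V_{T-n,T}, for n <= T. *)
Fixpoint Vrec (n : nat) : R -> R -> \bar R :=
  match n with
  | 0 => VT
  | n'.+1 => fun r p =>
      ereal_inf [set ((x * p - ev_cf M)%:E +
                       rho (lam (T - n)) (alpha (T - n))
                         (fun w => Vrec n' (r + x) (p * expR (- kY) + psi (T - n') w)))%E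
                | x in actions r]
  end.

Definition V (t : nat) (r p : R) : \bar R := Vrec (T - t) r p.

Definition Vtilde (t : nat) (r p : R) : \bar R :=
  rho (lam t) (alpha t) (fun w => V t.+1 r (p * expR (- kY) + psi t.+1 w)).

End values.
End EV.

Definition econvex {R : realType} (D : set R) (f : R -> \bar R) : Prop :=
  forall a b (l : R), D a -> D b -> (0 <= l <= 1)%R ->
    (f (l * a + (1 - l) * b)%R <= l%:E * f a + (1 - l)%:E * f b)%E.

(* Main.v *)
Require Import Defs.
From HB Require Import structures.
From mathcomp Require Import all_boot all_order all_algebra.
From mathcomp Require Import all_classical all_reals all_analysis.
From mathcomp Require Import measurable_realfun.
From mathcomp Require Import ring lra zify.
Import Order.TTheory GRing.Theory Num.Theory.
Local Open Scope classical_set_scope.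
Local Open Scope ring_scope.
Set Implicit Arguments. Unset Strict Implicit. Unset Printing Implicit Defensive.


Section ereal_helpers.
Context {R : realType}.
Local Open Scope ereal_scope.

Lemma fin_subge0 (x y : \bar R) : 0 <= x -> 0 <= y -> (x - y) \is a fin_num ->
  x \is a fin_num /\ y \is a fin_num.
Proof. by case: x => [x| |]; case: y => [y| |]. Qed.

Lemma maxe_conv (l u1 u2 : R) (zc za zb : \bar R) : (0 <= l <= 1)%R ->
  zc <= l%:E * za + (1 - l)%:E * zb ->
  maxe (zc - (l * u1 + (1 - l) * u2)%:E) 0 <=
  l%:E * maxe (za - u1%:E) 0 + (1 - l)%:E * maxe (zb - u2%:E) 0.
Proof.
move=> /andP[l0 l1] h.
have l0' : (0 <= 1 - l)%R by rewrite subr_ge0.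
rewrite ge_max; apply/andP; split; last first.
  by rewrite adde_ge0// mule_ge0// ?lee_fin// le_max lexx orbT.
apply: (@le_trans _ _ (l%:E * (za - u1%:E) + (1 - l)%:E * (zb - u2%:E))).
  apply: (le_trans (leeD2r _ h)).
  rewrite (@muleDr _ l%:E za (- u1%:E)) ?fin_num_adde_defl//.
  rewrite (@muleDr _ (1 - l)%:E zb (- u2%:E)) ?fin_num_adde_defl//.
  rewrite !muleN -!EFinM addeACA -oppeD// -EFinD.
apply: leeD.
  by apply: (@lee_wpmul2l _ l%:E); rewrite ?lee_fin// le_max lexx.
by apply: (@lee_wpmul2l _ (1 - l)%:E); rewrite ?lee_fin// le_max lexx.
Qed.


Lemma inf_comb (f1 f2 : R -> \bar R) (A1 A2 : set R) (c : \bar R) (l : R) :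
  (0 <= l <= 1)%R -> A1 !=set0 -> A2 !=set0 ->
  (forall x, A1 x -> f1 x \is a fin_num) -> (forall y, A2 y -> f2 y \is a fin_num) ->
  (forall x y, A1 x -> A2 y -> c <= l%:E * f1 x + (1 - l)%:E * f2 y) ->
  c <= l%:E * ereal_inf (f1 @` A1) + (1 - l)%:E * ereal_inf (f2 @` A2).
Proof.
move=> /andP[l0 l1] [x1 A1x1] [y1 A2y1] f1f f2f H.
have [l0E|lne0] := eqVneq l 0%R.
  rewrite l0E mul0e add0e subr0 mul1e; apply: le_ereal_inf_tmp => _ [y Ay <-].
  by have := H x1 y A1x1 Ay; rewrite l0E mul0e add0e subr0 mul1e.
have [l1E|lne1] := eqVneq l 1%R.
  rewrite l1E subrr mul0e adde0 mul1e; apply: le_ereal_inf_tmp => _ [x Ax <-].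
  by have := H x y1 Ax A2y1; rewrite l1E subrr mul0e adde0 mul1e.
have lp : (0 < l)%R by rewrite lt_neqAle eq_sym lne0.
have lq : (0 < 1 - l)%R by rewrite subr_gt0 lt_neqAle lne1.
case: c H => [c| |] H; last by rewrite leNye.
  2: by move: (H _ _ A1x1 A2y1); rewrite -(fineK (f1f _ A1x1)) -(fineK (f2f _ A2y1)).
have key : forall y, A2 y ->
    ((c - (1 - l) * fine (f2 y)) / l)%:E <= ereal_inf (f1 @` A1).
  move=> y Ay; apply: le_ereal_inf_tmp => _ [x Ax <-].
  move: (H _ _ Ax Ay); rewrite -(fineK (f1f _ Ax)) -(fineK (f2f _ Ay)).
  rewrite -!EFinM -EFinD !lee_fin => h.
  by rewrite ler_pdivrMr//; lra.
have I1f : ereal_inf (f1 @` A1) \is a fin_num.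
  rewrite fin_numElt; apply/andP; split.
    exact: (lt_le_trans (ltNyr _) (key _ A2y1)).
  apply: (le_lt_trans (ereal_inf_lbound _)); first by exists x1.
  by rewrite -(fineK (f1f _ A1x1)) ltry.
set i1 := fine (ereal_inf (f1 @` A1)).
have key2 : ((c - l * i1) / (1 - l))%:E <= ereal_inf (f2 @` A2).
  apply: le_ereal_inf_tmp => _ [y Ay <-].
  move: (key _ Ay); rewrite -(fineK I1f) -/i1 lee_fin ler_pdivrMr// => h.
  rewrite -(fineK (f2f _ Ay)) lee_fin ler_pdivrMr//; lra.
have I2f : ereal_inf (f2 @` A2) \is a fin_num.
  rewrite fin_numElt; apply/andP; split.
    exact: (lt_le_trans (ltNyr _) key2).
  apply: (le_lt_trans (ereal_inf_lbound _)); first by exists y1.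
  by rewrite -(fineK (f2f _ A2y1)) ltry.
move: key2; rewrite -(fineK I1f) -(fineK I2f) -/i1 lee_fin ler_pdivrMr// => h.
rewrite -!EFinM -EFinD lee_fin; lra.
Qed.

Lemma inf_restrict (f : R -> \bar R) (A : set R) :
  ereal_inf (f @` A) = ereal_inf (f @` (A `&` [set x | f x < +oo])).
Proof.
apply/eqP; rewrite eq_le; apply/andP; split.
  by apply: ereal_inf_le_tmp => _ [x [Ax _] <-]; exists x.
apply: le_ereal_inf_tmp => _ [x Ax <-].
have [fx|] := ltP (f x) +oo.
  by apply: ereal_inf_lbound; exists x.
by rewrite leye_eq => /eqP ->; rewrite leey.
Qed.

End ereal_helpers.

Section risk.
Context {R : realType} d (T : measurableType d) (mu : {measure set T -> \bar R}).
Local Open Scope ereal_scope.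

Definition Exm (Z : T -> \bar R) : \bar R := \int[mu]_w Z w.
Definition CVaRm (a : R) (Z : T -> \bar R) : \bar R :=
  ereal_inf [set (u%:E + ((1 - a)^-1)%:E * Exm (fun w => maxe (Z w - u%:E) 0))
            | u in [set: R]].
Definition rhom (l a : R) (Z : T -> \bar R) : \bar R :=
  (1 - l)%:E * Exm Z + l%:E * CVaRm a Z.

Lemma integrable_fin (Z : T -> \bar R) : measurable_fun setT Z ->
  Exm Z \is a fin_num -> mu.-integrable setT Z.
Proof.
move=> mZ; rewrite /Exm integralE => hfin.
have hp0 : forall x, [set: T] x -> 0 <= Z^\+ x by move=> x _; exact: funepos_ge0.
have hn0 : forall x, [set: T] x -> 0 <= Z^\- x by move=> x _; exact: funeneg_ge0.
have [hp hn] := fin_subge0 (integral_ge0 mu hp0) (integral_ge0 mu hn0) hfin.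
apply/integrableP; split => //.
have -> : (fun x => `|Z x|) = (Z^\+ \+ Z^\-) by rewrite -fune_abse.
rewrite ge0_integralD//; try exact: measurable_funepos; try exact: measurable_funeneg.
rewrite lte_add_pinfty// -ge0_fin_numE//; exact: integral_ge0.
Qed.


Lemma Ex_mono (f g : T -> \bar R) : measurable_fun setT f -> measurable_fun setT g ->
  (forall w, f w <= g w) -> Exm f <= Exm g.
Proof.
move=> mf mg h; rewrite /Exm (integralE mu setT f) (integralE mu setT g).
apply: leeB.
  apply: (ge0_le_integral mu measurableT) => //.
  - exact: measurable_funepos.
  - exact: measurable_funepos.
  - by move=> w _; rewrite !funeposE; apply: le_max2.
apply: (ge0_le_integral mu measurableT) => //.
- exact: measurable_funeneg.
- exact: measurable_funeneg.
- by move=> w _; rewrite !funenegE; apply: le_max2 => //; rewrite leeN2.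
Qed.

Lemma Ex_conv (Za Zb Zc : T -> \bar R) (l : R) :
  measurable_fun setT Za -> measurable_fun setT Zb -> measurable_fun setT Zc ->
  Exm Za \is a fin_num -> Exm Zb \is a fin_num -> (0 <= l <= 1)%R ->
  (forall w, Zc w <= l%:E * Za w + (1 - l)%:E * Zb w) ->
  Exm Zc <= l%:E * Exm Za + (1 - l)%:E * Exm Zb.
Proof.
move=> ma mb mc fa fb /andP[l0 l1] h.
have ia := integrable_fin ma fa; have ib := integrable_fin mb fb.
have iY : mu.-integrable setT (fun w => l%:E * Za w + (1 - l)%:E * Zb w).
  exact: (integrableD measurableT (integrableZl measurableT l ia)
                                  (integrableZl measurableT (1 - l) ib)).
have -> : l%:E * Exm Za + (1 - l)%:E * Exm Zb =
          Exm (fun w => l%:E * Za w + (1 - l)%:E * Zb w).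
  rewrite /Exm integralD//; try exact: integrableZl.
  by rewrite !integralZl.
have mY := measurable_int mu iY.
apply: (le_trans (Ex_mono mc mY h)); exact: le_refl.
Qed.


Lemma fin_of_phi (u k : R) (E : \bar R) : (0 < k)%R -> 0 <= E ->
  (u%:E + k%:E * E) \is a fin_num -> E \is a fin_num.
Proof.
move=> k0; case: E => [e| |] //= _.
by rewrite gt0_muley ?lte_fin.
Qed.

Lemma phi_ge (u k : R) (Z : T -> \bar R) : (0 < k)%R ->
  u%:E <= u%:E + k%:E * Exm (fun w => maxe (Z w - u%:E) 0).
Proof.
move=> k0; rewrite leeDl// mule_ge0//; first by rewrite lee_fin ltW.
by rewrite /Exm; apply: integral_ge0 => w _; rewrite le_max lexx orbT.
Qed.

Lemma CVaR_conv (Za Zb Zc : T -> \bar R) (l a : R) :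
  measurable_fun setT Za -> measurable_fun setT Zb -> measurable_fun setT Zc ->
  (0 <= l <= 1)%R -> (a < 1)%R ->
  (forall w, Zc w <= l%:E * Za w + (1 - l)%:E * Zb w) ->
  CVaRm a Za < +oo -> CVaRm a Zb < +oo ->
  CVaRm a Zc <= l%:E * CVaRm a Za + (1 - l)%:E * CVaRm a Zb.
Proof.
move=> ma mb mc /andP[l0 l1] a1 h ha hb.
set k := ((1 - a)^-1)%R.
have k0 : (0 < k)%R by rewrite invr_gt0 subr_gt0.
set phi := fun (Z : T -> \bar R) (u : R) =>
  u%:E + k%:E * Exm (fun w => maxe (Z w - u%:E) 0).
have mphi : forall (Z : T -> \bar R) u, measurable_fun setT Z ->
    measurable_fun setT (fun w => maxe (Z w - u%:E) 0).
  move=> Z u mZ; apply: measurable_maxe => //.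
  exact: emeasurable_funB.
have phifin : forall Z u, phi Z u < +oo -> phi Z u \is a fin_num.
  move=> Z u hu; rewrite fin_numElt hu andbT.
  exact: (lt_le_trans (ltNyr u) (phi_ge _ _ k0)).
rewrite /CVaRm -/k -/(phi Za) -/(phi Zb) -/(phi Zc).
rewrite (inf_restrict (phi Za)) (inf_restrict (phi Zb)).
apply: inf_comb.
- by rewrite l0 l1.
- move: ha; rewrite /CVaRm -/k -/(phi Za) => /ereal_inf_lt[_ [u _ <-] hu].
  by exists u.
- move: hb; rewrite /CVaRm -/k -/(phi Zb) => /ereal_inf_lt[_ [u _ <-] hu].
  by exists u.
- by move=> u [_ /= hu]; exact: phifin.
- by move=> u [_ /= hu]; exact: phifin.
move=> u1 u2 [_ /= h1] [_ /= h2].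
have hS : (phi Zc @` [set: R]) (phi Zc (l * u1 + (1 - l) * u2)%R) by exists (l * u1 + (1 - l) * u2)%R.
apply: (le_trans (ereal_inf_lbound hS)).
have l0' : (0 <= 1 - l)%R by rewrite subr_ge0.
set Ea := Exm (fun w => maxe (Za w - u1%:E) 0).
set Eb := Exm (fun w => maxe (Zb w - u2%:E) 0).
have Ea0 : 0 <= Ea by rewrite /Ea /Exm; apply: integral_ge0 => w _; rewrite le_max lexx orbT.
have Eb0 : 0 <= Eb by rewrite /Eb /Exm; apply: integral_ge0 => w _; rewrite le_max lexx orbT.
have Eaf : Ea \is a fin_num by apply: (fin_of_phi k0 Ea0); exact: phifin.
have Ebf : Eb \is a fin_num by apply: (fin_of_phi k0 Eb0); exact: phifin.
have hE : Exm (fun w => maxe (Zc w - (l * u1 + (1 - l) * u2)%:E) 0) <=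
          l%:E * Ea + (1 - l)%:E * Eb.
  apply: (le_trans (Ex_mono (mphi _ _ mc) _ (fun w => maxe_conv u1 u2 _ (h w)))).
  - apply: emeasurable_funD; apply: measurable_funeM; exact: mphi.
  - by rewrite l0 l1.
  rewrite /Ex /Exm ge0_integralD//; last 4 first.
  - by move=> w _; rewrite mule_ge0 ?lee_fin// le_max lexx orbT.
  - by apply: measurable_funeM; exact: mphi.
  - by move=> w _; rewrite mule_ge0 ?lee_fin// le_max lexx orbT.
  - by apply: measurable_funeM; exact: mphi.
  rewrite !ge0_integralZl ?lee_fin//; try exact: mphi.
  - by move=> w _; rewrite le_max lexx orbT.
  - by move=> w _; rewrite le_max lexx orbT.
apply: (le_trans (leeD2l _ (lee_wpmul2l _ hE))); first by rewrite lee_fin ltW.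
rewrite /phi -/Ea -/Eb -(fineK Eaf) -(fineK Ebf) -!EFinM -!EFinD lee_fin.
rewrite le_eqVlt; apply/orP; left; apply/eqP; ring.
Qed.


Lemma rho0 a Z : rhom 0 a Z = Exm Z.
Proof. by rewrite /rhom subr0 mul1e mul0e adde0. Qed.

Lemma rho1 a Z : rhom 1 a Z = CVaRm a Z.
Proof. by rewrite /rhom subrr mul0e add0e mul1e. Qed.

Lemma rho_fin l a Z : (0 < l < 1)%R -> rhom l a Z \is a fin_num ->
  Exm Z \is a fin_num /\ CVaRm a Z \is a fin_num.
Proof.
move=> /andP[l0 l1]; have l1' : (0 < 1 - l)%R by rewrite subr_gt0.
rewrite /rhom; case: (Exm Z) => [e| |]; case: (CVaRm a Z) => [c| |] //.
- by rewrite gt0_muley ?lte_fin.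
- by rewrite gt0_muleNy ?lte_fin.
- by rewrite gt0_muley ?lte_fin.
- by rewrite gt0_muley ?lte_fin// gt0_muley ?lte_fin.
- by rewrite gt0_muley ?lte_fin// gt0_muleNy ?lte_fin.
- by rewrite gt0_muleNy ?lte_fin.
- by rewrite gt0_muleNy ?lte_fin.
- by rewrite gt0_muleNy ?lte_fin// gt0_muleNy ?lte_fin.
Qed.

Lemma rho_conv (Za Zb Zc : T -> \bar R) (l a lam : R) :
  measurable_fun setT Za -> measurable_fun setT Zb -> measurable_fun setT Zc ->
  (0 <= l <= 1)%R -> (a < 1)%R -> (0 <= lam <= 1)%R ->
  (forall w, Zc w <= lam%:E * Za w + (1 - lam)%:E * Zb w) ->
  rhom l a Za \is a fin_num -> rhom l a Zb \is a fin_num ->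
  rhom l a Zc <= lam%:E * rhom l a Za + (1 - lam)%:E * rhom l a Zb.
Proof.
move=> ma mb mc /andP[l0 l1] a1 hlam h fa fb.
have [l0E|lne0] := eqVneq l 0%R.
  by move: fa fb; rewrite l0E !rho0 => fa fb; apply: Ex_conv.
have [l1E|lne1] := eqVneq l 1%R.
  move: fa fb; rewrite l1E !rho1 => fa fb; apply: CVaR_conv => //.
  - by move: fa; rewrite fin_numElt => /andP[_ ->].
  - by move: fb; rewrite fin_numElt => /andP[_ ->].
have lp : (0 < l)%R by rewrite lt_neqAle eq_sym lne0.
have lq : (l < 1)%R by rewrite lt_neqAle lne1.
have [Eaf Caf] := rho_fin (introT andP (conj lp lq)) fa.
have [Ebf Cbf] := rho_fin (introT andP (conj lp lq)) fb.
have hE := Ex_conv ma mb mc Eaf Ebf hlam h.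
have hC := CVaR_conv ma mb mc hlam a1 h.
rewrite /rhom.
apply: (le_trans (leeD (lee_wpmul2l _ hE) (lee_wpmul2l _ (hC _ _)))).
- by rewrite lee_fin subr_ge0 ltW.
- by rewrite lee_fin ltW.
- by rewrite ltey_eq Caf.
- by rewrite ltey_eq Cbf.
rewrite -(fineK Eaf) -(fineK Ebf) -(fineK Caf) -(fineK Cbf).
rewrite -!EFinM -!EFinD lee_fin.
rewrite le_eqVlt; apply/orP; left; apply/eqP; ring.
Qed.

End risk.

Section enum.
Context {R : realType}.
Definition qn (n : nat) : R := ratr (odflt 0%R (unpickle n : option rat)).

Lemma qn_dense (u e : R) : (0 < e)%R -> exists n, (u <= qn n <= u + e)%R.
Proof.
move=> e0; have : (u < u + e)%R by rewrite ltrDl.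
move=> /rat_in_itvoo[q]; rewrite in_itv /= => /andP[h1 h2].
by exists (pickle q); rewrite /qn pickleK /= (ltW h1) (ltW h2).
Qed.
End enum.

Section param.
Context {R : realType} d1 (T1 : measurableType d1) d (T : measurableType d)
  (mu : {sigma_finite_measure set T -> \bar R}).
Local Open Scope ereal_scope.

Lemma Ex_param (F : T1 -> T -> \bar R) :
  measurable_fun setT (fun z : T1 * T => F z.1 z.2) ->
  measurable_fun setT (fun x => Exm mu (F x)).
Proof.
move=> mF.
set G := fun z : T1 * T => F z.1 z.2.
have -> : (fun x => Exm mu (F x)) =
    (fun x => fubini_F mu G^\+ x - fubini_F mu G^\- x).
  apply/funext => x; rewrite /Exm integralE /fubini_F.
  by congr (_ - _); apply: eq_integral => y _; rewrite /G ?funeposE ?funenegE.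
apply: emeasurable_funB.
  apply: measurable_fun_fubini_tonelli_F; first exact: measurable_funepos.
  by move=> z; exact: funepos_ge0.
apply: measurable_fun_fubini_tonelli_F; first exact: measurable_funeneg.
by move=> z; exact: funeneg_ge0.
Qed.

Lemma CVaR_param (a : R) (F : T1 -> T -> \bar R) : (a < 1)%R ->
  measurable_fun setT (fun z : T1 * T => F z.1 z.2) ->
  measurable_fun setT (fun x => CVaRm mu a (F x)).
Proof.
move=> a1 mF.
set k := ((1 - a)^-1)%R.
have k0 : (0 <= k)%R by rewrite /k invr_ge0 subr_ge0 ltW.
set phi := fun x (u : R) =>
  u%:E + k%:E * Exm mu (fun w => maxe (F x w - u%:E) 0).
have mphi : forall u, measurable_fun setT (fun x => phi x u).
  move=> u; apply: emeasurable_funD => //; apply: measurable_funeM.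
  apply: (Ex_param (F := fun x w => maxe (F x w - u%:E) 0)).
  by apply: measurable_maxe => //; apply: emeasurable_funB.
have msec : forall x, measurable_fun setT (F x).
  move=> x; exact: (measurable_fun_pair2 (f := fun z : T1 * T => F z.1 z.2) x mF).
have -> : (fun x => CVaRm mu a (F x)) =
          (fun x => einfs (fun n => phi x (qn n)) 0%N).
  apply/funext => x; rewrite /CVaRm /einfs /sdrop /= -/k.
  apply/eqP; rewrite eq_le; apply/andP; split.
    by apply: ereal_inf_le_tmp => _ [n _ <-]; exists (qn n).
  apply: le_ereal_inf_tmp => _ [u _ <-].
  apply/lee_addgt0Pr => e e0.
  have [n /andP[hn1 hn2]] := qn_dense u e0.
  apply: le_trans; first by apply: ereal_inf_lbound; exists n.
  rewrite /phi addeAC; apply: leeD; first by rewrite -EFinD lee_fin.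
  apply: (@lee_wpmul2l _ k%:E); first by rewrite lee_fin.
  apply: Ex_mono.
  - by apply: measurable_maxe => //; apply: emeasurable_funD.
  - by apply: measurable_maxe => //; apply: emeasurable_funD.
  - move=> w; apply: le_max2 => //; apply: leeD2l.
    by rewrite -EFinN lee_fin lerN2.
apply: (measurable_fun_einfs (f := fun n x => phi x (qn n))).
by move=> n; exact: mphi.
Qed.

Lemma rho_param (l a : R) (F : T1 -> T -> \bar R) : (a < 1)%R ->
  measurable_fun setT (fun z : T1 * T => F z.1 z.2) ->
  measurable_fun setT (fun x => rhom mu l a (F x)).
Proof.
move=> a1 mF; rewrite /rhom; apply: emeasurable_funD; apply: measurable_funeM.
  exact: Ex_param.
exact: CVaR_param.
Qed.
End param.



Section model.
Context {R : realType} (M : ev_model R) (lam alpha : nat -> R).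
Local Notation T := (ev_T M).
Local Notation P := (noise_prob M : probability _ R).
Local Notation e := (expR (- ev_kY M)).

Hypothesis Hxmax : 0 < ev_xmax M.
Hypothesis Hpref : 0 < ev_pref M.
Hypothesis Hgh : 0 <= ev_gh M.
Hypothesis HgY : measurable_fun [set: R] (ev_gY M).
Hypothesis Hla : forall t, (t <= T)%N -> 0 <= lam t <= 1 /\ 0 < alpha t < 1.
Hypothesis HVT : forall r p, statesR M r -> VT M lam alpha r p \is a fin_num.
Hypothesis HVt : forall t r p, (t < T)%N -> statesR M r ->
     Vtilde M lam alpha t r p \is a fin_num.

Lemma statesRP r : statesR M r <-> 0 <= r <= ev_Rmax M.
Proof. by rewrite /statesR /= in_itv. Qed.
Lemma actionsP r x : actions M r x <-> 0 <= x <= Num.min (ev_Rmax M - r) (ev_xmax M).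
Proof. by rewrite /actions /= in_itv. Qed.

Lemma rhoE l a Z : rho M l a Z = rhom P l a Z.
Proof. by []. Qed.

Lemma mnoise : measurable_fun setT (@noise R).
Proof.
rewrite /noise; apply: measurable_funD => //.
apply: measurable_fun_ifT => //.
- exact: (measurableT_comp measurable_fst measurable_snd).
- exact: (measurableT_comp measurable_snd measurable_snd).
Qed.

Lemma mpsi s : measurable_fun setT (psi M s).
Proof. by rewrite /psi; apply: measurable_funD => //; exact: mnoise. Qed.

Lemma mpsiY s : measurable_fun setT (psiY M s).
Proof. by rewrite /psiY; apply: measurable_funB => //; exact: mpsi. Qed.

Lemma mshift (f : @noise_space R -> R) (p : R) : measurable_fun setT f ->
  measurable_fun setT (fun w => p * e + f w).
Proof. by move=> mf; apply: measurable_funD. Qed.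

Lemma mshift2 (f : @noise_space R -> R) : measurable_fun setT f ->
  measurable_fun setT (fun z : R * @noise_space R => z.1 * e + f z.2).
Proof.
move=> mf; apply: measurable_funD.
  by apply: measurable_funM => //; exact: measurable_fst.
exact: (measurableT_comp mf measurable_snd).
Qed.

Lemma states_conv a b l : statesR M a -> statesR M b -> 0 <= l <= 1 ->
  statesR M (l * a + (1 - l) * b).
Proof.
move=> /statesRP/andP[a0 a1] /statesRP/andP[b0 b1] /andP[l0 l1].
apply/statesRP; apply/andP; split; first by rewrite addr_ge0 ?mulr_ge0 ?subr_ge0.
have -> : ev_Rmax M = l * ev_Rmax M + (1 - l) * ev_Rmax M by ring.
by rewrite lerD ?ler_wpM2l ?subr_ge0.
Qed.

Definition goodW (W : R -> R -> \bar R) :=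
  (forall r, statesR M r -> measurable_fun setT (W r)) /\
  (forall p, econvex (statesR M) (fun r => W r p)).

Lemma VT_good : goodW (VT M lam alpha).
Proof.
have [/andP[l0 l1] /andP[a0 a1]] := Hla (leqnn T).
set h := shortage M.
set F := fun r p w => ((1 + ev_gh M * h r + ev_gY M (p * e + psiY M T.+1 w))
                         * h r * ev_pref M).
have mF : forall r p, measurable_fun setT (fun w => F r p w).
  move=> r p; rewrite /F; apply: measurable_funM => //.
  apply: measurable_funM => //; apply: measurable_funD => //.
  exact: (measurableT_comp HgY (mshift p (mpsiY _))).
split.
  move=> r _.
  have -> : VT M lam alpha r =
    (fun p => rhom P (lam T) (alpha T) (fun w => (F r p w)%:E)) by [].
  apply: rho_param => //.
  apply/measurable_EFinP; rewrite /F /=.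
  apply: measurable_funM => //; apply: measurable_funM => //.
  apply: measurable_funD => //.
  exact: (measurableT_comp HgY (mshift2 (mpsiY _))).
move=> p a b l Sa Sb hl; rewrite /VT !rhoE.
apply: rho_conv => //.
- by apply/measurable_EFinP; exact: mF.
- by apply/measurable_EFinP; exact: mF.
- by apply/measurable_EFinP; exact: mF.
- by rewrite l0 l1.
- move=> w; rewrite -!EFinM -EFinD lee_fin.
  set g := ev_gY M _.
  have hE : h (l * a + (1 - l) * b) = l * h a + (1 - l) * h b.
    by rewrite /h /shortage; ring.
  rewrite -/h hE -subr_ge0.
  have -> : l * ((1 + ev_gh M * h a + g) * h a * ev_pref M) +
      (1 - l) * ((1 + ev_gh M * h b + g) * h b * ev_pref M) -
      (1 + ev_gh M * (l * h a + (1 - l) * h b) + g) * (l * h a + (1 - l) * h b) *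
      ev_pref M = ev_pref M * ev_gh M * (l * (1 - l)) * (h a - h b) ^+ 2 by ring.
  case/andP: hl => hl0 hl1.
  apply: mulr_ge0; last exact: sqr_ge0.
  apply: mulr_ge0; first by apply: mulr_ge0 => //; exact: ltW.
  by apply: mulr_ge0 => //; rewrite subr_ge0.
- exact: HVT.
- exact: HVT.
Qed.


Lemma Vtilde_good t : (t < T)%N -> goodW (V M lam alpha t.+1) ->
  goodW (Vtilde M lam alpha t).
Proof.
move=> tT [mV cV].
have [/andP[l0 l1] /andP[a0 a1]] := Hla (ltnW tT).
split.
  move=> r Sr.
  have -> : Vtilde M lam alpha t r = (fun p => rhom P (lam t) (alpha t)
      (fun w => V M lam alpha t.+1 r (p * e + psi M t.+1 w))) by [].
  apply: rho_param => //.
  exact: (measurableT_comp (mV r Sr) (mshift2 (mpsi _))).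
move=> p a b l Sa Sb hl; rewrite /Vtilde !rhoE.
apply: rho_conv => //.
- exact: (measurableT_comp (mV a Sa) (mshift p (mpsi _))).
- exact: (measurableT_comp (mV b Sb) (mshift p (mpsi _))).
- exact: (measurableT_comp (mV _ (states_conv Sa Sb hl)) (mshift p (mpsi _))).
- by rewrite l0 l1.
- by move=> w; exact: cV.
- exact: HVt.
- exact: HVt.
Qed.

Lemma act_states r x : statesR M r -> actions M r x -> statesR M (r + x).
Proof.
move=> /statesRP/andP[r0 r1] /actionsP/andP[x0]; rewrite le_min => /andP[x1 _].
by apply/statesRP; rewrite addr_ge0//= -lerBrDl.
Qed.

Lemma act0 r : statesR M r -> actions M r 0.
Proof.
move=> /statesRP/andP[r0 r1]; apply/actionsP; rewrite lexx le_min subr_ge0 r1.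
exact: ltW.
Qed.

Lemma act_conv r1 r2 x1 x2 l : actions M r1 x1 -> actions M r2 x2 -> 0 <= l <= 1 ->
  actions M (l * r1 + (1 - l) * r2) (l * x1 + (1 - l) * x2).
Proof.
move=> /actionsP/andP[x10]; rewrite le_min => /andP[x11 x12].
move=> /actionsP/andP[x20]; rewrite le_min => /andP[x21 x22] /andP[l0 l1].
have l0' : 0 <= 1 - l by rewrite subr_ge0.
apply/actionsP; rewrite addr_ge0 ?mulr_ge0//= le_min; apply/andP; split.
  have -> : ev_Rmax M - (l * r1 + (1 - l) * r2) =
            l * (ev_Rmax M - r1) + (1 - l) * (ev_Rmax M - r2) by ring.
  by rewrite lerD// ler_wpM2l.
have -> : ev_xmax M = l * ev_xmax M + (1 - l) * ev_xmax M by ring.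
by rewrite lerD// ler_wpM2l.
Qed.

Definition Gf t p c0 r x : \bar R :=
  ((x * p + c0)%:E + Vtilde M lam alpha t (r + x) p)%E.

Lemma Gf_fin t p c0 r x : (t < T)%N -> statesR M r -> actions M r x ->
  Gf t p c0 r x \is a fin_num.
Proof.
move=> tT Sr Ax; rewrite /Gf fin_numD /=; exact: HVt (act_states Sr Ax).
Qed.

Lemma real_conv_aux (l x1 x2 p c0 V1 V2 V3 : R) :
  (V1%:E <= l%:E * V2%:E + (1 - l)%:E * V3%:E)%E ->
  ((((l * x1 + (1 - l) * x2) * p + c0)%:E + V1%:E <=
    l%:E * ((x1 * p + c0)%:E + V2%:E) + (1 - l)%:E * ((x2 * p + c0)%:E + V3%:E)))%E.
Proof.
rewrite -!EFinM -!EFinD !lee_fin => hc.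
rewrite -subr_ge0.
have -> : l * (x1 * p + c0 + V2) + (1 - l) * (x2 * p + c0 + V3) -
   ((l * x1 + (1 - l) * x2) * p + c0 + V1) = l * V2 + (1 - l) * V3 - V1 by ring.
by rewrite subr_ge0.
Qed.

Lemma convG2 t p c0 r1 r2 x1 x2 l : (t < T)%N -> goodW (Vtilde M lam alpha t) ->
  statesR M r1 -> statesR M r2 -> actions M r1 x1 -> actions M r2 x2 ->
  0 <= l <= 1 ->
  (Gf t p c0 (l * r1 + (1 - l) * r2) (l * x1 + (1 - l) * x2) <=
   l%:E * Gf t p c0 r1 x1 + (1 - l)%:E * Gf t p c0 r2 x2)%E.
Proof.
move=> tT [_ cVt] S1 S2 A1 A2 hl.
have S1' := act_states S1 A1; have S2' := act_states S2 A2.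
have hc := cVt p _ _ l S1' S2' hl.
have eq : l * r1 + (1 - l) * r2 + (l * x1 + (1 - l) * x2) =
          l * (r1 + x1) + (1 - l) * (r2 + x2) by ring.
rewrite /Gf eq.
move: hc; rewrite -(fineK (HVt p tT S1')) -(fineK (HVt p tT S2')).
rewrite -(fineK (HVt p tT (states_conv S1' S2' hl))).
exact: real_conv_aux.
Qed.

Lemma convG t p c0 r : (t < T)%N -> goodW (Vtilde M lam alpha t) ->
  statesR M r -> econvex (actions M r) (Gf t p c0 r).
Proof.
move=> tT gV Sr x1 x2 l A1 A2 hl.
have := convG2 p c0 tT gV Sr Sr A1 A2 hl.
by have -> : l * r + (1 - l) * r = r by ring.
Qed.

Lemma VrecS n r p : Vrec M lam alpha n.+1 r p =
  ereal_inf [set ((x * p - ev_cf M)%:E +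
                  rho M (lam (T - n.+1)) (alpha (T - n.+1))
                    (fun w => Vrec M lam alpha n (r + x) (p * e + psi M (T - n) w)))%E
            | x in actions M r].
Proof. reflexivity. Qed.

Lemma V_unfold t r p : (t < T)%N ->
  V M lam alpha t r p = ereal_inf [set Gf t p (- ev_cf M) r x | x in actions M r].
Proof.
move=> tT; rewrite /V.
have -> : (T - t = (T - t.+1).+1)%N by lia.
have e1 : (T - (T - t.+1).+1 = t)%N by lia.
have e2 : (T - (T - t.+1) = t.+1)%N by lia.
rewrite VrecS e1 e2.
reflexivity.
Qed.


Lemma V_good t : (t < T)%N -> goodW (Vtilde M lam alpha t) -> goodW (V M lam alpha t).
Proof.
move=> tT gVt; have [mVt _] := gVt.
split; last first.
  move=> p r1 r2 l S1 S2 hl.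
  rewrite !V_unfold //.
  apply: inf_comb.
  - exact: hl.
  - by exists 0; exact: act0.
  - by exists 0; exact: act0.
  - by move=> x Ax; exact: Gf_fin.
  - by move=> x Ax; exact: Gf_fin.
  move=> x1 x2 A1 A2.
  apply: le_trans; last exact: convG2.
  by apply: ereal_inf_lbound; exists (l * x1 + (1 - l) * x2) => //; exact: act_conv.
move=> r Sr.
have := act0 Sr; move=> /actionsP/andP[_].
set m := Num.min (ev_Rmax M - r) (ev_xmax M) => m0.
pose sq n := match n with
  | 0%N => 0 | 1%N => m
  | n'.+2 => if (0 <= @qn R n') && (@qn R n' <= m) then @qn R n' else 0 end.
have Am : actions M r m by apply/actionsP; rewrite m0 lexx.
have sqA : forall n, actions M r (sq n).
  case=> [|[|n]] /=; [exact: act0 | exact: Am |].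
  by case: ifP => [/andP[h1 h2]|_]; [apply/actionsP; rewrite h1 h2 | exact: act0].
have -> : V M lam alpha t r =
    (fun p => einfs (fun n => Gf t p (- ev_cf M) r (sq n)) 0%N).
  apply/funext => p; rewrite V_unfold // /einfs /sdrop /=.
  apply/eqP; rewrite eq_le; apply/andP; split.
    by apply: ereal_inf_le_tmp => _ [n _ <-]; exists (sq n).
  apply: le_ereal_inf_tmp => _ [x Ax <-].
  set I := ereal_inf _.
  have lbI : forall n, (I <= Gf t p (- ev_cf M) r (sq n))%E.
    by move=> n; apply: ereal_inf_lbound; exists n.
  have Gfin : forall y, actions M r y -> Gf t p (- ev_cf M) r y \is a fin_num.
    by move=> y Ay; exact: Gf_fin.
  apply/lee_addgt0Pr => eps eps0.
  have /actionsP/andP[x0 xm] := Ax.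
  have lb1 : (I <= Gf t p (- ev_cf M) r m)%E := lbI 1%N.
  have [xE|xne] := eqVneq x m.
    apply: (le_trans lb1); rewrite -xE.
    by rewrite leeDl// lee_fin ltW.
  have xltm : x < m by rewrite lt_neqAle xne xm.
  pose gx := fine (Gf t p (- ev_cf M) r x).
  pose gm := fine (Gf t p (- ev_cf M) r m).
  have hx : gx%:E = Gf t p (- ev_cf M) r x := fineK (Gfin _ Ax).
  have hm : gm%:E = Gf t p (- ev_cf M) r m := fineK (Gfin _ Am).
  have [Dle|Dgt] := leP gm gx.
    apply: (le_trans lb1); rewrite -hm -hx -EFinD lee_fin.
    by rewrite (le_trans Dle)// lerDl ltW.
  set del := Num.min (m - x) (eps * (m - x) / (gm - gx)).
  have del0 : 0 < del.
    by rewrite lt_min subr_gt0 xltm /= divr_gt0 ?mulr_gt0 ?subr_gt0.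
  have hdel1 : del <= m - x by rewrite ge_min lexx.
  have hdel2 : del <= eps * (m - x) / (gm - gx) by rewrite ge_min lexx orbT.
  have [n /andP[hn1 hn2]] := qn_dense x del0.
  have qm : qn n <= m by rewrite (le_trans hn2)// -lerBrDl.
  have sqE : sq n.+2 = qn n by rewrite /= (le_trans x0 hn1) qm.
  set th := (qn n - x) / (m - x).
  have mx0 : 0 < m - x by rewrite subr_gt0.
  have th01 : 0 <= th <= 1.
    rewrite /th divr_ge0 ?subr_ge0//= ler_pdivrMr// mul1r.
    by rewrite lerD2r.
  have qE : th * m + (1 - th) * x = qn n.
    rewrite /th; field; by rewrite lt0r_neq0.
  have cv := convG p (- ev_cf M) tT gVt Sr Am Ax th01.
  rewrite qE -sqE in cv.
  apply: (le_trans (lbI n.+2)); apply: (le_trans cv).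
  rewrite -hm -hx -!EFinM -!EFinD lee_fin.
  have hq : qn n - x <= eps * (m - x) / (gm - gx) by rewrite lerBlDl (le_trans hn2)// lerD2l.
  have hq' : (qn n - x) * (gm - gx) <= eps * (m - x).
    by rewrite -ler_pdivlMr ?subr_gt0.
  have : th * (gm - gx) <= eps.
    have -> : th * (gm - gx) = ((qn n - x) * (gm - gx)) / (m - x).
      by rewrite /th; field; rewrite lt0r_neq0.
    by rewrite ler_pdivrMr.
  move=> h; rewrite -subr_ge0.
  have -> : gx + eps - (th * gm + (1 - th) * gx) = eps - th * (gm - gx) by ring.
  by rewrite subr_ge0.
apply: measurable_fun_einfs => n.
rewrite /Gf; apply: emeasurable_funD.
  by apply/measurable_EFinP; apply: measurable_funD => //; exact: measurable_funM.
exact: mVt (act_states Sr (sqA n)).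
Qed.


Lemma main_ind n : (n <= T)%N -> goodW (V M lam alpha (T - n)).
Proof.
elim: n => [|n IH] hn.
  rewrite subn0.
  have -> : V M lam alpha T = VT M lam alpha.
    by apply/funext => r; apply/funext => p; rewrite /V subnn.
  exact: VT_good.
have tT : (T - n.+1 < T)%N by lia.
have e1 : ((T - n.+1).+1 = T - n)%N by lia.
apply: V_good => //; apply: Vtilde_good => //.
rewrite e1; apply: IH; lia.
Qed.

Lemma final :
  (forall t p, (t < T)%N ->
     (forall r, statesR M r ->
        econvex (actions M r)
          (fun x => ((x * p)%:E + Vtilde M lam alpha t (r + x) p)%E)) /\
     econvex (statesR M) (fun r => Vtilde M lam alpha t r p) /\
     econvex (statesR M) (fun r => V M lam alpha t r p)) /\
  (forall p, econvex (statesR M) (fun r => VT M lam alpha r p)).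
Proof.
split; last by move=> p; have [_ h] := VT_good; exact: h.
move=> t p tT.
have gV1 : goodW (V M lam alpha t.+1).
  have := @main_ind (T - t.+1) (leq_subr _ _).
  by rewrite (_ : (T - (T - t.+1) = t.+1)%N); last lia.
have gVt := Vtilde_good tT gV1.
have gV := V_good tT gVt.
split; [|split]; [| exact: gVt.2 p | exact: gV.2 p].
move=> r Sr x1 x2 l A1 A2 hl.
have := convG p 0 tT gVt Sr A1 A2 hl.
by rewrite /Gf !addr0.
Qed.

End model.

Theorem proposition1 (R : realType) (M : ev_model R) (lam alpha : nat -> R) :
  (1 <= ev_T M)%N ->
  0 < ev_Rmax M -> 0 < ev_xmax M -> 0 <= ev_R0 M <= ev_Rmax M ->
  0 < ev_pref M -> 0 <= ev_gh M ->
  0 < ev_kY M -> 0 < ev_sY M -> 0 < ev_lJ M < 1 -> 0 < ev_sJ M ->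
  (forall y, 0 < ev_gY M y) ->
  measurable_fun [set: R] (ev_gY M) ->
  (forall t, (t <= ev_T M)%N -> 0 <= lam t <= 1 /\ 0 < alpha t < 1) ->
  (* well-definedness: the value functions are finite *)
  (forall r p, statesR M r -> VT M lam alpha r p \is a fin_num) ->
  (forall t r p, (t < ev_T M)%N -> statesR M r ->
     Vtilde M lam alpha t r p \is a fin_num) ->
  (forall t p, (t < ev_T M)%N ->
     (forall r, statesR M r ->
        econvex (actions M r)
          (fun x => ((x * p)%:E + Vtilde M lam alpha t (r + x) p)%E)) /\
     econvex (statesR M) (fun r => Vtilde M lam alpha t r p) /\
     econvex (statesR M) (fun r => V M lam alpha t r p)) /\
  (forall p, econvex (statesR M) (fun r => VT M lam alpha r p)).
Proof.
move=> T1 Rm xm R0 pref gh kY sY lJ sJ gYpos mgY Hla HVT HVt.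
by apply: final.
Qed.
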